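(* Let $0=t_0<\dots<t_N=T$, $\tau_k=t_k-t_{k-1}$, $r_k=\tau_k/\tau_{k-1}$ ($2\le k\le N$). Let $r_{\max}\approx4.8645$ be the positive root of $x^3=(2x+1)^2$, fix $\delta\in(0,r_{\max})$, assume $r_2>0$ and $0<r_k\le r_{\max}-\delta$ for $3\le k\le N$, and set $C_r=\sqrt{r_{\max}}/(1+r_{\max})^2$. Let $\mathcal V_h$ be the space of grid functions $v=(v_0,\dots,v_M)$ with $v_0=v_M=0$, with $\Delta_hv_i=(v_{i+1}-2v_i+v_{i-1})/h^2$, $\nabla_hv_i=(v_{i+1}-v_{i-1})/(2h)$, $\langle u,v\rangle=\sum_{i=1}^{M-1}hu_iv_i$, $\|u\|=\sqrt{\langle u,u\rangle}$. Then for any $\epsilon>0$, any $2\le n\le N$ and any $u^k\in\mathcal V_h$ ($1\le k\le n$), $$2\sum_{k=2}^n\sum_{j=2}^k\theta^{(k)}_{k-j}\langle-\Delta_hu^j,u^k\rangle+\frac{\epsilon^2}{C_r\delta}\sum_{k=2}^n\tau_k\|u^k\|^2\ge2\epsilon\sum_{k=2}^n\sum_{j=2}^k\theta^{(k)}_{k-j}\langle\nabla_hu^j,u^k\rangle.$$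
   Context: BDF2 kernels: $b^{(1)}_0=1/\tau_1$; for $n\ge2$, $b^{(n)}_0=\frac{1+2r_n}{\tau_n(1+r_n)}$, $b^{(n)}_1=-\frac{r_n^2}{\tau_n(1+r_n)}$, $b^{(n)}_j=0$ for $2\le j\le n-1$. DOC kernels $\theta^{(n)}_{n-j}$ ($1\le j\le n$) are defined by $\sum_{j=k}^n\theta^{(n)}_{n-j}b^{(j)}_{j-k}=\delta_{nk}$ for all $1\le k\le n$. *)

(* Defs.v *)
From HB Require Import structures.
From mathcomp Require Import all_boot all_order all_algebra.
Set Implicit Arguments. Unset Strict Implicit. Unset Printing Implicit Defensive.
Import Order.TTheory GRing.Theory Num.Theory.
Local Open Scope ring_scope.

Section Defs.
Context {R : rcfType}.

Definition tau (t : nat -> R) (k : nat) : R := t k - t k.-1.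
Definition tratio (t : nat -> R) (k : nat) : R := tau t k / tau t k.-1.

Definition bdf2 (t : nat -> R) (n j : nat) : R :=
  if n == 1%N then (if j == 0%N then 1 / tau t 1 else 0)
  else if j == 0%N then (1 + 2 * tratio t n) / (tau t n * (1 + tratio t n))
  else if j == 1%N then - (tratio t n ^+ 2) / (tau t n * (1 + tratio t n))
  else 0.

(* grid functions are v : nat -> R, only indices 0..M matter *)
Definition in_Vh (M : nat) (v : nat -> R) : Prop := v 0%N = 0 /\ v M = 0.
Definition lap_h (h : R) (v : nat -> R) (i : nat) : R :=
  (v i.+1 - 2 * v i + v i.-1) / h ^+ 2.
Definition grad_h (h : R) (v : nat -> R) (i : nat) : R :=
  (v i.+1 - v i.-1) / (2 * h).
Definition ip_h (M : nat) (h : R) (u v : nat -> R) : R :=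
  \sum_(1 <= i < M) h * u i * v i.
Definition norm_h (M : nat) (h : R) (u : nat -> R) : R := Num.sqrt (ip_h M h u u).
End Defs.

(* Main.v *)
Require Import Defs.
From HB Require Import structures.
From mathcomp Require Import all_boot all_order all_algebra.
From mathcomp Require Import ring lra zify.
Import Order.TTheory GRing.Theory Num.Theory.
Local Open Scope ring_scope.

Lemma sigma3 (R : rcfType) (s : R) : 0 < s -> s ^+ 6 = (2 * s^+2 + 1) ^+ 2 -> s ^+ 3 = 2 * s ^+ 2 + 1.
Proof.
move=> s0 H.
have h1 : (s ^+ 3 - (2 * s ^+ 2 + 1)) * (s ^+ 3 + (2 * s ^+ 2 + 1)) = 0.
  rewrite -subr_sqr -exprM H; ring.
move/eqP: h1; rewrite mulf_eq0 => /orP[/eqP|/eqP] h.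
  by apply/eqP; rewrite -subr_eq0 h.
have : 0 < s ^+ 3 + (2 * s ^+ 2 + 1) by nra.
by rewrite h ltxx.
Qed.

Lemma keyX (R : rcfType) (s S : R) : 0 < s -> s ^+ 3 = 2 * s ^+ 2 + 1 -> 0 <= S -> S <= s ->
  s / (1 + s^+2) ^+ 2 * (s ^+ 2 - S ^+ 2) * (1 + S ^+ 2) <= 1 + 2 * S ^+ 2 - S ^+ 3.
Proof.
move=> s0 h3 S0 Ss.
have s2 : 2 <= s by nra.
have e1 : s * (s * (s - 2)) = 1 by nra.
have sn0 : s != 0 by rewrite gt_eqF.
have e : s * (s - 2) = 1 / s.
  rewrite -[in RHS]e1. rewrite mulrAC. rewrite mulfV //. by rewrite mul1r.
have P : (1 + S^+2) / s <= S ^+ 2 + (s - 2) * S + s * (s - 2).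
  rewrite ler_pdivrMr // !mulrDl -[s * (s-2) * s]mulrC e1.
  have : 0 <= (s - 2) * S * s by rewrite mulr_ge0 // ?mulr_ge0 // ?subr_ge0 // ltW.
  nra.
have X : 1 + 2 * S ^+ 2 - S ^+ 3 = (s - S) * (S ^+ 2 + (s - 2) * S + s * (s - 2)).
  apply/eqP; rewrite -subr_eq0; apply/eqP.
  have -> : 1 + 2 * S ^+ 2 - S ^+ 3 - (s - S) * (S ^+ 2 + (s - 2) * S + s * (s - 2)) = -(s^+3 - (2 * s^+2 + 1)) by ring.
  by rewrite h3 subrr oppr0.
have C : s / (1 + s^+2) ^+ 2 * (s + S) <= 1 / s.
  have q : 0 < (1 + s^+2) ^+ 2 by apply: exprn_gt0; nra.
  rewrite ler_pdivlMr //.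
  have -> : s / (1 + s^+2) ^+ 2 * (s + S) * s = (s * (s + S) * s) / (1 + s^+2) ^+ 2 by ring.
  rewrite ler_pdivrMr // mul1r; nra.
rewrite X.
have -> : s / (1 + s ^+ 2) ^+ 2 * (s ^+ 2 - S ^+ 2) * (1 + S ^+ 2) = (s - S) * ((s / (1 + s ^+ 2) ^+ 2 * (s + S)) * (1 + S^+2)) by ring.
apply: ler_wpM2l; first lra.
apply: le_trans P.
have S2 : 0 <= 1 + S^+2 by nra.
have C2 := ler_wpM2l S2 C.
rewrite mulrC; apply: le_trans C2 _.
by rewrite mul1r mulrC.
Qed.


Section Ineqs.
Variables (R : rcfType) (S Cd K : R).
Hypotheses (S0 : 0 < S) (Cd0 : 0 <= Cd) (CdX : Cd * (1 + S^+2) <= 1 + 2 * S^+2 - S^+3)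
  (KS : K * (1 + S^+2) = S^+3).

Lemma L0 : 0 <= 2 - Cd - K.
Proof.
have h : 0 < 1 + S^+2 by nra.
rewrite -(pmulr_rge0 _ h).
have -> : (1 + S ^+ 2) * (2 - Cd - K) = 2 + 2 * S^+2 - Cd * (1 + S^+2) - K * (1 + S^+2) by ring.
rewrite KS; move: CdX; lra.
Qed.

Lemma Lr (r : R) : 0 <= r -> r <= S^+2 -> 0 <= 2 + 4 * r - r * S - (1 + r) * (Cd + K).
Proof.
move=> r0 rS.
have h : 0 < 1 + S^+2 by nra.
have LS : 0 <= 2 + 4 * S^+2 - S^+2 * S - (1 + S^+2) * (Cd + K).
  have -> : 2 + 4 * S^+2 - S^+2 * S - (1 + S^+2) * (Cd + K) = 2 + 4 * S^+2 - S^+3 - Cd * (1 + S^+2) - K * (1 + S^+2) by ring.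
  rewrite KS.
  have : 0 <= Cd * (1 + S^+2) by apply: mulr_ge0 => //; nra.
  move: CdX; lra.
have l0 := L0.
have S2 : 0 < S^+2 by apply: exprn_gt0.
rewrite -(pmulr_rge0 _ S2).
have -> : S ^+ 2 * (2 + 4 * r - r * S - (1 + r) * (Cd + K)) =
   (S^+2 - r) * (2 - Cd - K) + r * (2 + 4 * S^+2 - S^+2 * S - (1 + S^+2) * (Cd + K)) by ring.
apply: addr_ge0; apply: mulr_ge0 => //; lra.
Qed.

Lemma KR (r : R) : 0 <= r -> r <= S^+2 -> r * Num.sqrt r <= K * (1 + r).
Proof.
move=> r0 rS.
have s0 : 0 <= Num.sqrt r by apply: sqrtr_ge0.
have sS : Num.sqrt r <= S.
  by rewrite -[X in _ <= X](ger0_norm (ltW S0)) -sqrtr_sqr ler_sqrt // exprn_ge0 // ltW.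
have h : 0 < 1 + S^+2 by nra.
have Ke : K = S^+3 / (1 + S^+2) by rewrite -KS mulfK // gt_eqF.
rewrite Ke mulrAC ler_pdivlMr //.
have : r * Num.sqrt r <= S^+2 * S by nra.
have : 0 <= r * S^+2 * (S - Num.sqrt r) by apply: mulr_ge0; [apply: mulr_ge0 => //; apply: exprn_ge0; apply: ltW|lra].
nra.
Qed.

Lemma step_poly (r v v' : R) : 0 < r -> r <= S^+2 ->
  0 <= K * r * (1 + r) * v^+2 + 2 * (1 + 2 * r) * v'^+2 - 2 * r^+2 * v' * v - (1 + r) * (Cd + K) * v'^+2.
Proof.
move=> r0 rS.
set s := Num.sqrt r.
have s0 : 0 <= s by apply: sqrtr_ge0.
have ss : s ^+ 2 = r by rewrite sqr_sqrtr // ltW.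
have sS : s <= S by rewrite -[X in _ <= X](ger0_norm (ltW S0)) -sqrtr_sqr ler_sqrt // exprn_ge0 // ltW.
have kr := @KR r (ltW r0) rS.
have h1 : 2 * r^+2 * v' * v <= r * s * (v'^+2 + r * v^+2).
  have : 0 <= s^+3 * (v' - s * v)^+2 by apply: mulr_ge0; [apply: exprn_ge0|apply: sqr_ge0].
  rewrite -ss; nra.
have h2 : r * s * r * v^+2 <= K * r * (1 + r) * v^+2.
  have H : 0 <= r * v^+2 by apply: mulr_ge0; [apply: ltW| apply: sqr_ge0].
  have -> : r * s * r * v^+2 = (r * s) * (r * v^+2) by ring.
  have -> : K * r * (1 + r) * v^+2 = (K * (1 + r)) * (r * v^+2) by ring.
  have := ler_wpM2r H kr. rewrite -/s. move=> Q. exact: Q.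
have h3 : 0 <= (2 + 4 * r - r * S - (1 + r) * (Cd + K)) * v'^+2.
  by apply: mulr_ge0; [apply: Lr; lra | apply: sqr_ge0].
have h4 : r * s * v'^+2 <= r * S * v'^+2.
  have H : 0 <= r * v'^+2 by apply: mulr_ge0; [apply: ltW| apply: sqr_ge0].
  have -> : r * s * v'^+2 = s * (r * v'^+2) by ring.
  have -> : r * S * v'^+2 = S * (r * v'^+2) by ring.
  have Q := ler_wpM2r H sS. exact: Q.
lra.
Qed.

Lemma step_div (tau0 tau1 v v' : R) : 0 < tau0 -> 0 < tau1 -> tau1 / tau0 <= S^+2 ->
  Cd * (v'^+2 / tau1) + K * (v'^+2 / tau1) <=
  K * (v^+2 / tau0) + 2 * (v' * ((1 + 2 * (tau1 / tau0)) / (tau1 * (1 + tau1 / tau0)) * v'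
      + - ((tau1 / tau0) ^+ 2) / (tau1 * (1 + tau1 / tau0)) * v)).
Proof using S0 Cd0 CdX KS.
move=> t0 t1 rS.
have r0 : 0 < tau1 / tau0 by apply: divr_gt0.
have P := @step_poly _ v v' r0 rS.
rewrite -subr_ge0.
set r := tau1 / tau0 in P r0 *.
have e : K * (v ^+ 2 / tau0) + 2 * (v' * ((1 + 2 * r) / (tau1 * (1 + r)) * v' + - (r ^+ 2) / (tau1 * (1 + r)) * v)) -
   (Cd * (v' ^+ 2 / tau1) + K * (v' ^+ 2 / tau1)) =
   (K * r * (1 + r) * v^+2 + 2 * (1 + 2 * r) * v'^+2 - 2 * r^+2 * v' * v - (1 + r) * (Cd + K) * v'^+2)
   / (tau1 * (1 + r)).
  have -> : v ^+ 2 / tau0 = r * v^+2 / tau1 by rewrite /r; field; apply/andP; split; rewrite gt_eqF.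
  field; apply/andP; split; rewrite gt_eqF //; lra.
rewrite e; apply: divr_ge0 => //; apply: mulr_ge0; lra.
Qed.

Lemma base_div (tau0 r v : R) : 0 < tau0 -> 0 < r ->
  Cd * (v^+2 / tau0) + K * (v^+2 / tau0) <= 2 * (v * ((1 + 2 * r) / (tau0 * (1 + r)) * v + 0)).
Proof using S0 Cd0 CdX KS.
move=> t0 r0.
have l0 := L0.
rewrite addr0 -subr_ge0.
have -> : 2 * (v * ((1 + 2 * r) / (tau0 * (1 + r)) * v)) - (Cd * (v ^+ 2 / tau0) + K * (v ^+ 2 / tau0))
  = ((2 - Cd - K) * (1 + r) + 2 * r) * v^+2 / (tau0 * (1 + r)).
  field; apply/andP; split; rewrite gt_eqF //; lra.
apply: divr_ge0; last by apply: mulr_ge0; lra.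
apply: mulr_ge0; last exact: sqr_ge0.
apply: addr_ge0; [apply: mulr_ge0|]; lra.
Qed.

End Ineqs.


Lemma b0e (R : rcfType) (t : nat -> R) k : k != 1%N ->
  bdf2 t k 0 = (1 + 2 * tratio t k) / (tau t k * (1 + tratio t k)).
Proof. by move=> /negbTE h; rewrite /bdf2 h. Qed.
Lemma b1e (R : rcfType) (t : nat -> R) k : k != 1%N ->
  bdf2 t k 1 = - (tratio t k ^+ 2) / (tau t k * (1 + tratio t k)).
Proof. by move=> /negbTE h; rewrite /bdf2 h. Qed.
Lemma b2e (R : rcfType) (t : nat -> R) k j : k != 1%N -> (2 <= j)%N -> bdf2 t k j = 0.
Proof. by move=> /negbTE h; case: j => [|[|j]] //; rewrite /bdf2 h. Qed.

Section BDF.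
Variables (R : rcfType) (t : nat -> R) (N : nat) (S Cd K : R).
Hypotheses (S0 : 0 < S) (Cd0 : 0 <= Cd) (CdX : Cd * (1 + S^+2) <= 1 + 2 * S^+2 - S^+3)
  (KS : K * (1 + S^+2) = S^+3)
  (tau_pos : forall k, (1 <= k <= N)%N -> 0 < tau t k)
  (rS : forall k, (3 <= k <= N)%N -> tratio t k <= S^+2).

Lemma bdf_pos (v : nat -> R) : v 1%N = 0 -> forall m, (2 <= m <= N)%N ->
  Cd * (\sum_(2 <= k < m.+1) v k ^+ 2 / tau t k) + K * (v m ^+ 2 / tau t m)
  <= 2 * \sum_(2 <= k < m.+1) v k * (bdf2 t k 0 * v k + bdf2 t k 1 * v k.-1).
Proof.
move=> v1; elim=> [|m IH] // /andP[hm hN].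
case: (ltnP m 2) => hm2.
  have -> : m = 1%N by case: m hm hm2 {IH hN} => [|[|m]] //.
  rewrite !big_nat1 /= v1 mulr0 b0e //.
  have t2 : 0 < tau t 2 by apply: tau_pos; rewrite /=; apply: leq_trans hN.
  have t1 : 0 < tau t 1 by apply: tau_pos; rewrite /=; apply: leq_trans hN.
  have bd := @base_div R S Cd K S0 Cd0 CdX KS. apply: bd => //.
  by rewrite /tratio /=; apply: divr_gt0.
have IH' := IH (introT andP (conj hm2 (ltnW hN))).
rewrite !(big_nat_recr m.+1) //=.
have t2 : 0 < tau t m.+1 by apply: tau_pos; lia.
have t1 : 0 < tau t m by apply: tau_pos; lia.
have r3 : tratio t m.+1 <= S^+2 by apply: rS; lia.
have m1 : m.+1 != 1%N by rewrite eqSS; apply/eqP; lia.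
rewrite (@b0e R t m.+1 m1) (@b1e R t m.+1 m1).
have sd := @step_div R S Cd K S0 Cd0 CdX KS (tau t m) (tau t m.+1) (v m) (v m.+1) t1 t2 r3.
rewrite /tratio /= in sd *.
rewrite mulrDr mulrDr.
lra.
Qed.
End BDF.


Section Theta.
Variables (R : rcfType) (t : nat -> R) (N : nat) (theta : nat -> nat -> R).
Hypotheses (tau_pos : forall k, (1 <= k <= N)%N -> 0 < tau t k)
  (Hth : forall m k, (1 <= k)%N -> (k <= m)%N -> (m <= N)%N ->
     \sum_(k <= j < m.+1) theta m (m - j)%N * bdf2 t j (j - k)%N = (k == m)%:R).

Fixpoint vsub (a : nat -> R) (k : nat) : R :=
  if k is k'.+1 then (if k' is 0 then 0 else (a k - bdf2 t k 1 * vsub a k') / bdf2 t k 0) else 0.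

Lemma b0_pos k : (2 <= k <= N)%N -> 0 < bdf2 t k 0.
Proof.
move=> hk.
have k1 : k != 1%N by apply/eqP; lia.
have tk : 0 < tau t k by apply: tau_pos; lia.
have tk1 : 0 < tau t k.-1 by apply: tau_pos; lia.
have r0 : 0 < tratio t k by apply: divr_gt0.
rewrite b0e //; apply: divr_gt0; first lra.
apply: mulr_gt0 => //; lra.
Qed.

Lemma Bv (a : nat -> R) k : (2 <= k <= N)%N ->
  bdf2 t k 0 * vsub a k + bdf2 t k 1 * vsub a k.-1 = a k.
Proof.
move=> hk.
have b0 := @b0_pos k hk.
case: k hk b0 => [|[|k]] //= hk b0.
rewrite mulrC divfK ?gt_eqF //; ring.
Qed.

Lemma bsum (w : nat -> R) k : (2 <= k)%N -> w 1%N = 0 ->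
  \sum_(2 <= l < k.+1) bdf2 t k (k - l)%N * w l = bdf2 t k 0 * w k + bdf2 t k 1 * w k.-1.
Proof.
move=> hk w1.
have k1 : k != 1%N by apply/eqP; lia.
rewrite big_nat_recr //= subnn.
case: k hk k1 => [|[|k]] // _ k1.
case: k k1 => [|k] k1.
  by rewrite big_geq // /= w1 mulr0 add0r addr0.
rewrite big_nat_recr //=.
have -> : (k.+3 - k.+2)%N = 1%N by lia.
rewrite big1_seq ?add0r; first by rewrite addrC.
move=> l /andP[_]; rewrite mem_index_iota => hl.
rewrite b2e ?mul0r //; lia.
Qed.

Lemma ThetaA (a : nat -> R) k : (2 <= k <= N)%N ->
  \sum_(2 <= j < k.+1) theta k (k - j)%N * a j = vsub a k.
Proof.
move=> hk.
set v := vsub a.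
have v1 : v 1%N = 0 by [].
transitivity (\sum_(2 <= j < k.+1) \sum_(2 <= l < k.+1 | (l < j.+1)%N) theta k (k - j)%N * (bdf2 t j (j - l)%N * v l)).
  apply: eq_big_nat => j hj.
  rewrite -(big_nat_widen _ _ _ predT) ?ltnS; last lia.
  rewrite -mulr_sumr bsum //; last lia.
  by rewrite Bv //; lia.
rewrite (exchange_big_dep_nat predT) //=.
transitivity (\sum_(2 <= l < k.+1) v l * (l == k)%:R).
  apply: eq_big_nat => l hl.
  rewrite -(Hth k l) ?mulr_sumr; try lia.
  rewrite (@big_nat_widenl _ _ _ l 2 k.+1 predT) /=; last lia.
  apply: eq_big => [j|j _]; first by rewrite ltnS. ring.
rewrite big_nat_recr /=; last lia.
rewrite eqxx mulr1 big1_seq ?add0r //.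
move=> l /andP[_]; rewrite mem_index_iota => hl.
have -> : (l == k) = false by apply/eqP; lia.
by rewrite mulr0.
Qed.
End Theta.


Lemma quad_nonneg (R : rcfType) (c Cd eps tk bk vk : R) : 0 < c -> 0 < tk -> c * Cd = eps ^+ 2 ->
  0 <= c * (tk * bk ^+ 2) - 2 * eps * (bk * vk) + Cd * (vk ^+ 2 / tk).
Proof.
move=> c0 t0 e.
have -> : c * (tk * bk ^+ 2) - 2 * eps * (bk * vk) + Cd * (vk ^+ 2 / tk)
  = ((c * tk * bk - eps * vk) ^+ 2 + (c * Cd - eps ^+ 2) * vk ^+ 2) / (c * tk).
  field; apply/andP; split; rewrite gt_eqF //.
rewrite e subrr mul0r addr0; apply: divr_ge0; first exact: sqr_ge0.
by apply: mulr_ge0; apply: ltW.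
Qed.

Section Scalar.
Variables (R : rcfType) (t : nat -> R) (N : nat) (theta : nat -> nat -> R) (S Cd K c eps : R).
Hypotheses (tau_pos : forall k, (1 <= k <= N)%N -> 0 < tau t k)
  (Hth : forall m k, (1 <= k)%N -> (k <= m)%N -> (m <= N)%N ->
     \sum_(k <= j < m.+1) theta m (m - j)%N * bdf2 t j (j - k)%N = (k == m)%:R)
  (rS : forall k, (3 <= k <= N)%N -> tratio t k <= S^+2)
  (S0 : 0 < S) (Cd0 : 0 <= Cd) (CdX : Cd * (1 + S^+2) <= 1 + 2 * S^+2 - S^+3)
  (KS : K * (1 + S^+2) = S^+3) (c0 : 0 < c) (cCd : c * Cd = eps ^+ 2).

Lemma scalar_main (a b : nat -> R) n : (2 <= n <= N)%N ->
  0 <= 2 * (\sum_(2 <= k < n.+1) \sum_(2 <= j < k.+1) theta k (k - j)%N * (a j * a k))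
     + c * (\sum_(2 <= k < n.+1) tau t k * b k ^+ 2)
     - 2 * eps * (\sum_(2 <= k < n.+1) \sum_(2 <= j < k.+1) theta k (k - j)%N * (a j * b k)).
Proof.
move=> hn.
set v := @vsub R t a.
have G : forall k X, (2 <= k <= n)%N -> \sum_(2 <= j < k.+1) theta k (k - j)%N * (a j * X) = X * v k.
  move=> k X hk; rewrite /v -(@ThetaA R t N theta tau_pos Hth a k); last lia.
  rewrite mulr_sumr; apply: eq_bigr => j _; by rewrite mulrA [LHS]mulrC.
have -> : \sum_(2 <= k < n.+1) \sum_(2 <= j < k.+1) theta k (k - j)%N * (a j * a k)
   = \sum_(2 <= k < n.+1) v k * (bdf2 t k 0 * v k + bdf2 t k 1 * v k.-1).
  apply: eq_big_nat => k hk; rewrite G; last lia.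
  have hk' : (2 <= k <= N)%N by lia.
  have := @Bv R t N tau_pos a k hk'; rewrite -/v => ->.
  exact: mulrC.
have -> : \sum_(2 <= k < n.+1) \sum_(2 <= j < k.+1) theta k (k - j)%N * (a j * b k)
   = \sum_(2 <= k < n.+1) b k * v k.
  apply: eq_big_nat => k hk; rewrite G //; lia.
have hb := @bdf_pos R t N S Cd K S0 Cd0 CdX KS tau_pos rS v (erefl _) n hn.
have K0 : 0 <= K * (v n ^+ 2 / tau t n).
  have h : 0 < 1 + S^+2 by apply: ltr_wpDr; [apply: sqr_ge0|apply: ltr01].
  have Ke : K = S^+3 / (1 + S^+2) by rewrite -KS mulfK // gt_eqF.
  apply: mulr_ge0; first by rewrite Ke; apply: divr_ge0; [apply: exprn_ge0; apply: ltW|apply: ltW].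
  apply: divr_ge0; first exact: sqr_ge0.
  by apply: ltW; apply: tau_pos; lia.
have Q : 0 <= \sum_(2 <= k < n.+1) (c * (tau t k * b k ^+ 2) - 2 * eps * (b k * v k) + Cd * (v k ^+ 2 / tau t k)).
  rewrite big_seq_cond; apply: sumr_ge0 => k /andP[]; rewrite mem_index_iota => hk _.
  by apply: quad_nonneg => //; apply: tau_pos; lia.
rewrite big_split /= sumrB -!mulr_sumr in Q.
lra.
Qed.
End Scalar.


Section Ids.
Variable R : rcfType.
Implicit Types x y : nat -> R.

Lemma ID1g x y M : \sum_(0 <= i < M.+1) (x i.+1 - x i) * (y i.+1 - y i) =
  \sum_(1 <= i < M.+1) (- (x i.+1 - 2 * x i + x i.-1)) * y i
  + (x M.+1 - x M) * y M.+1 - (x 1%N - x 0%N) * y 0%N.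
Proof.
elim: M => [|M IH].
  rewrite big_nat1 big_geq //; ring.
rewrite big_nat_recr // IH [in RHS]big_nat_recr //=; ring.
Qed.

Lemma ID2g x y M : \sum_(0 <= i < M.+1) (x i.+1 - x i) * (y i + y i.+1) =
  \sum_(1 <= i < M.+1) (x i.+1 - x i.-1) * y i
  + x M.+1 * y M.+1 - x 0%N * y 0%N + x 1%N * y 0%N - x M * y M.+1.
Proof.
elim: M => [|M IH].
  rewrite big_nat1 big_geq //; ring.
rewrite big_nat_recr // IH [in RHS]big_nat_recr //=; ring.
Qed.

Lemma ID3g y M : \sum_(0 <= i < M.+1) (y i ^+ 2 + y i.+1 ^+ 2) =
  2 * \sum_(1 <= i < M.+1) y i ^+ 2 + y 0%N ^+ 2 + y M.+1 ^+ 2.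
Proof.
elim: M => [|M IH].
  rewrite big_nat1 big_geq //; ring.
rewrite big_nat_recr // IH [in RHS]big_nat_recr //=; ring.
Qed.

Lemma ip_lap M h x y : 0 < h -> in_Vh M x -> in_Vh M y ->
  ip_h M h (fun i => - lap_h h x i) y =
  \sum_(0 <= i < M) h * ((x i.+1 - x i) / h * ((y i.+1 - y i) / h)).
Proof.
move=> h0 [x0 xM] [y0 yM]; rewrite /ip_h /lap_h.
case: M xM yM => [|M] xM yM; first by rewrite !big_geq.
transitivity (h^-1 * \sum_(1 <= i < M.+1) (- (x i.+1 - 2 * x i + x i.-1)) * y i).
  rewrite mulr_sumr; apply: eq_bigr => i _; field; by rewrite gt_eqF.
transitivity (h^-1 * \sum_(0 <= i < M.+1) (x i.+1 - x i) * (y i.+1 - y i)).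
  by rewrite ID1g xM yM x0 y0; congr (_ * _); ring.
rewrite mulr_sumr; apply: eq_bigr => i _; field; by rewrite gt_eqF.
Qed.

Lemma ip_grad M h x y : 0 < h -> in_Vh M x -> in_Vh M y ->
  ip_h M h (grad_h h x) y =
  \sum_(0 <= i < M) h * ((x i.+1 - x i) / h * ((y i + y i.+1) / 2)).
Proof.
move=> h0 [x0 xM] [y0 yM]; rewrite /ip_h /grad_h.
case: M xM yM => [|M] xM yM; first by rewrite !big_geq.
transitivity (2^-1 * \sum_(1 <= i < M.+1) (x i.+1 - x i.-1) * y i).
  rewrite mulr_sumr; apply: eq_bigr => i _; field; by rewrite gt_eqF.
transitivity (2^-1 * \sum_(0 <= i < M.+1) (x i.+1 - x i) * (y i + y i.+1)).
  by rewrite ID2g xM yM x0 y0; congr (_ * _); ring.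
rewrite mulr_sumr; apply: eq_bigr => i _; field; by rewrite gt_eqF.
Qed.

Lemma norm_bound M h y : 0 < h -> in_Vh M y ->
  \sum_(0 <= i < M) h * ((y i + y i.+1) / 2) ^+ 2 <= norm_h M h y ^+ 2.
Proof.
move=> h0 [y0 yM].
have ip0 : 0 <= ip_h M h y y.
  rewrite /ip_h big_seq_cond; apply: sumr_ge0 => i _.
  rewrite -mulrA; apply: mulr_ge0; [exact: ltW | rewrite -expr2; exact: sqr_ge0].
rewrite /norm_h sqr_sqrtr // /ip_h.
case: M yM ip0 => [|M] yM _; first by rewrite !big_geq.
apply: (@le_trans _ _ (\sum_(0 <= i < M.+1) h * ((y i ^+ 2 + y i.+1 ^+ 2) / 2))).
  rewrite big_seq_cond [X in _ <= X]big_seq_cond; apply: ler_sum => i _.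
  apply: ler_wpM2l; first exact: ltW.
  have : 0 <= (y i - y i.+1) ^+ 2 by exact: sqr_ge0.
  lra.
rewrite -mulr_sumr -mulr_suml ID3g y0 yM.
have -> : h * ((2 * \sum_(1 <= i < M.+1) y i ^+ 2 + 0 ^+ 2 + 0 ^+ 2) / 2) = h * \sum_(1 <= i < M.+1) y i ^+ 2.
  by rewrite expr0n /= !addr0; field.
have E : \sum_(1 <= i < M.+1) h * y i * y i = h * \sum_(1 <= i < M.+1) y i ^+ 2.
  by rewrite mulr_sumr; apply: eq_bigr => i _; rewrite expr2 mulrA.
have Q : forall a b : R, a = b -> a <= b by move=> a b ->.
apply: Q; symmetry; exact: E.
Qed.
End Ids.


Lemma exch3 (R : rcfType) (n M : nat) (h : R) (F : nat -> nat -> nat -> R) :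
  \sum_(2 <= k < n.+1) \sum_(2 <= j < k.+1) \sum_(0 <= i < M) h * F k j i
  = \sum_(0 <= i < M) h * \sum_(2 <= k < n.+1) \sum_(2 <= j < k.+1) F k j i.
Proof.
transitivity (\sum_(2 <= k < n.+1) \sum_(0 <= i < M) \sum_(2 <= j < k.+1) h * F k j i).
  by apply: eq_bigr => k _; exact: exchange_big.
rewrite exchange_big; apply: eq_bigr => i _; rewrite mulr_sumr; apply: eq_bigr => k _.
by rewrite mulr_sumr.
Qed.

Lemma exch2 (R : rcfType) (n M : nat) (h : R) (F : nat -> nat -> R) :
  \sum_(2 <= k < n.+1) \sum_(0 <= i < M) h * F k i
  = \sum_(0 <= i < M) h * \sum_(2 <= k < n.+1) F k i.
Proof. by rewrite exchange_big; apply: eq_bigr => i _; rewrite mulr_sumr. Qed.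

Theorem mainTheorem8 (R : rcfType) (N : nat) (t : nat -> R)
  (rmax delta : R) (theta : nat -> nat -> R)
  (M : nat) (h eps : R) (n : nat) (u : nat -> nat -> R) :
  t 0%N = 0 ->
  (forall k, (k < N)%N -> t k < t k.+1) ->
  0 < rmax -> rmax ^+ 3 = (2 * rmax + 1) ^+ 2 ->
  0 < delta -> delta < rmax ->
  (2 <= N)%N -> 0 < tratio t 2 ->
  (forall k, (3 <= k <= N)%N -> 0 < tratio t k /\ tratio t k <= rmax - delta) ->
  (* DOC kernels: theta n m = theta^{(n)}_m *)
  (forall m k, (1 <= k)%N -> (k <= m)%N -> (m <= N)%N ->
     \sum_(k <= j < m.+1) theta m (m - j)%N * bdf2 t j (j - k)%N
       = (k == m)%:R) ->
  0 < h -> 0 < eps ->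
  (2 <= n)%N -> (n <= N)%N ->
  (forall k, (1 <= k <= n)%N -> in_Vh M (u k)) ->
  let Cr := Num.sqrt rmax / (1 + rmax) ^+ 2 in
  2 * (\sum_(2 <= k < n.+1) \sum_(2 <= j < k.+1)
         theta k (k - j)%N * ip_h M h (fun i => - lap_h h (u j) i) (u k))
  + eps ^+ 2 / (Cr * delta) * (\sum_(2 <= k < n.+1) tau t k * norm_h M h (u k) ^+ 2)
  >= 2 * eps * (\sum_(2 <= k < n.+1) \sum_(2 <= j < k.+1)
         theta k (k - j)%N * ip_h M h (grad_h h (u j)) (u k)).
Proof.
move=> t0 tinc rm0 rm3 d0 drm N2 r2 rk Hth h0 e0 n2 nN uV.
cbv zeta.
set Cr := Num.sqrt rmax / (1 + rmax) ^+ 2.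
set s := Num.sqrt rmax.
set S := Num.sqrt (rmax - delta).
have rms : rmax = s ^+ 2 by rewrite sqr_sqrtr // ltW.
have Rs : rmax - delta = S ^+ 2 by rewrite sqr_sqrtr // subr_ge0 ltW.
have s0 : 0 < s by rewrite sqrtr_gt0.
have S0 : 0 < S by rewrite sqrtr_gt0 subr_gt0.
have s3 : s ^+ 3 = 2 * s ^+ 2 + 1.
  apply: sigma3 => //.
  by rewrite (_ : 6 = 2 * 3)%N // exprM -rms rm3.
have Ss : S <= s by rewrite ler_sqrt; [lra | apply: ltW].
have Crs : Cr = s / (1 + s ^+ 2) ^+ 2 by rewrite /Cr -rms.
have Cr0 : 0 < Cr by rewrite Crs; apply: divr_gt0 => //; apply: exprn_gt0; apply: ltr_wpDr; [apply: sqr_ge0|apply: ltr01].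
set Cd := Cr * delta.
have Cd0 : 0 < Cd by apply: mulr_gt0.
have CdX : Cd * (1 + S ^+ 2) <= 1 + 2 * S ^+ 2 - S ^+ 3.
  have := @keyX R s S s0 s3 (ltW S0) Ss.
  have -> : s ^+ 2 - S ^+ 2 = delta by rewrite -rms -Rs; ring.
  by rewrite /Cd Crs.
set K := S ^+ 3 / (1 + S ^+ 2).
have KS : K * (1 + S ^+ 2) = S ^+ 3.
  rewrite /K mulfVK // gt_eqF //; apply: ltr_wpDr; [apply: sqr_ge0|apply: ltr01].
set c := eps ^+ 2 / Cd.
have c0 : 0 < c by apply: divr_gt0 => //; apply: exprn_gt0.
have cCd : c * Cd = eps ^+ 2 by rewrite /c mulfVK // gt_eqF.
have tau_pos : forall k, (1 <= k <= N)%N -> 0 < tau t k.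
  move=> [|k] // /andP[_ hk]; rewrite /tau subr_gt0 /=; exact: tinc.
have rS : forall k, (3 <= k <= N)%N -> tratio t k <= S ^+ 2.
  by move=> k hk; rewrite -Rs; case: (rk k hk).
have hn : (2 <= n <= N)%N by rewrite n2 nN.
pose P j i := (u j i.+1 - u j i) / h.
pose Q k i := (u k i + u k i.+1) / 2.
have EA : \sum_(2 <= k < n.+1) \sum_(2 <= j < k.+1)
         theta k (k - j)%N * ip_h M h (fun i => - lap_h h (u j) i) (u k)
   = \sum_(0 <= i < M) h * \sum_(2 <= k < n.+1) \sum_(2 <= j < k.+1) theta k (k - j)%N * (P j i * P k i).
  rewrite -exch3; apply: eq_big_nat => k hk; apply: eq_big_nat => j hj.
  rewrite ip_lap //; try (apply: uV; clear -hk hj; lia).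
  by rewrite mulr_sumr; apply: eq_bigr => i _; rewrite mulrCA.
have EB : \sum_(2 <= k < n.+1) \sum_(2 <= j < k.+1)
         theta k (k - j)%N * ip_h M h (grad_h h (u j)) (u k)
   = \sum_(0 <= i < M) h * \sum_(2 <= k < n.+1) \sum_(2 <= j < k.+1) theta k (k - j)%N * (P j i * Q k i).
  rewrite -exch3; apply: eq_big_nat => k hk; apply: eq_big_nat => j hj.
  rewrite ip_grad //; try (apply: uV; clear -hk hj; lia).
  by rewrite mulr_sumr; apply: eq_bigr => i _; rewrite mulrCA.
have EC : \sum_(0 <= i < M) h * \sum_(2 <= k < n.+1) tau t k * Q k i ^+ 2
   <= \sum_(2 <= k < n.+1) tau t k * norm_h M h (u k) ^+ 2.
  rewrite -exch2 big_seq_cond [X in _ <= X]big_seq_cond; apply: ler_sum => k.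
  rewrite andbT mem_index_iota => hk.
  have tk : 0 < tau t k by apply: tau_pos; clear -hk nN; lia.
  have hk1 : (1 <= k <= n)%N by clear -hk; lia.
  have nb := @norm_bound R M h (u k) h0 (uV k hk1).
  apply: (le_trans _ (ler_wpM2l (ltW tk) nb)).
  rewrite mulr_sumr big_seq_cond [X in _ <= X]big_seq_cond; apply: ler_sum => i _.
  rewrite mulrCA; exact: lexx.
rewrite EA EB.
have H : 0 <= \sum_(0 <= i < M) h * (2 * (\sum_(2 <= k < n.+1) \sum_(2 <= j < k.+1) theta k (k - j)%N * (P j i * P k i))
     + c * (\sum_(2 <= k < n.+1) tau t k * Q k i ^+ 2)
     - 2 * eps * (\sum_(2 <= k < n.+1) \sum_(2 <= j < k.+1) theta k (k - j)%N * (P j i * Q k i))).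
  apply: sumr_ge0 => i _; apply: mulr_ge0; first exact: ltW.
  exact: (@scalar_main R t N theta S Cd K c eps tau_pos Hth rS S0 (ltW Cd0) CdX KS c0 cCd (P^~ i) (Q^~ i) n hn).
move: H.
under eq_bigr => i _ do rewrite mulrBr mulrDr [h * (2 * _)]mulrCA [h * (c * _)]mulrCA [h * (2 * eps * _)]mulrCA.
rewrite sumrB big_split /= -!mulr_sumr => H.
rewrite -mulr_sumr in EC.
have EC' := ler_wpM2l (ltW c0) EC.
lra.
Qed.
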